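(* Let $r\in\mathbb{F}_2((x^{-1}))$, $k\in\mathbb{N}$, and $f\in\mathbb{F}_2[x]$ with $f(1)=1$. Then $p(r)_i=p(r+(1+x)^kf)_i$ for all $0\le i<k$, and $p(r)_k\ne p(r+(1+x)^kf)_k$.
   Context: $\mathbb{F}_2((x^{-1}))$ is the field of formal series $\sum_{z\in\mathbb{Z}}a_zx^z$, $a_z\in\mathbb{F}_2$, with $a_z\ne0$ for only finitely many positive $z$. The polynomial part is $[\sum a_zx^z]=\sum_{z\ge0}a_zx^z$. $S(r)=\frac{r}{x+1}$ if $[r](1)=0$ and $S(r)=\frac{xr}{x+1}$ if $[r](1)=1$. The parity sequence is $p(r)_k=[S^k(r)](1)\in\mathbb{F}_2$ for $k\in\mathbb{N}$. *)

(* Defs.v *)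
From HB Require Import structures.
From mathcomp Require Import all_boot all_order all_algebra.
Set Implicit Arguments. Unset Strict Implicit. Unset Printing Implicit Defensive.
Import Order.TTheory GRing.Theory Num.Theory.
Local Open Scope ring_scope.

(* F_2((x^{-1})): formal series sum_{z in Z} a_z x^z over F_2 with a_z = 0
   for all z above some explicit bound [ldeg]. *)
Record laurent := Laurent {
  coef : int -> 'F_2 ;
  ldeg : int ;
  coef_ub : forall z : int, ldeg < z -> coef z = 0 }.

Definition leq_series (r s : laurent) := forall z, coef r z = coef s z.

Definition ppart (r : laurent) : {poly 'F_2} :=
  \poly_(i < (absz (ldeg r)).+1) coef r (Posz i).

Lemma addL_ub (r s : laurent) z :
  Num.max (ldeg r) (ldeg s) < z -> coef r z + coef s z = 0.
Proof.
rewrite gt_max => /andP [h1 h2].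
by rewrite (coef_ub h1) (coef_ub h2) addr0.
Qed.
Definition addL (r s : laurent) : laurent :=
  @Laurent (fun z => coef r z + coef s z) _ (@addL_ub r s).

Definition pcoef (f : {poly 'F_2}) (z : int) : 'F_2 :=
  match z with Posz n => f`_n | Negz _ => 0 end.
Lemma polyL_ub (f : {poly 'F_2}) z : (size f)%:Z < z -> pcoef f z = 0.
Proof.
case: z => [n|n] //= h.
rewrite nth_default //. by rewrite ltz_nat in h; apply: ltnW.
Qed.
Definition polyL (f : {poly 'F_2}) : laurent :=
  @Laurent (pcoef f) _ (@polyL_ub f).

Lemma mulxL_ub (r : laurent) z : ldeg r + 1 < z -> coef r (z - 1) = 0.
Proof. move=> h; apply: coef_ub; by rewrite ltrBrDr. Qed.
Definition mulxL (r : laurent) : laurent :=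
  @Laurent (fun z => coef r (z - 1)) _ (@mulxL_ub r).

(* Division by x + 1: since 1/(x+1) = sum_{j>=1} x^{-j}, the coefficient of
   r/(x+1) at z is sum_{j>=1} a_{z+j}, a finite sum (terms with z+j > ldeg
   vanish). *)
Definition divx1_coef (r : laurent) (z : int) : 'F_2 :=
  \sum_(j < absz (ldeg r - z)) coef r (z + (j.+1)%:Z).
Lemma divx1_ub (r : laurent) z : ldeg r < z -> divx1_coef r z = 0.
Proof.
move=> h; apply: big1 => j _; apply: coef_ub.
apply: (lt_le_trans h); rewrite lerDl; by [].
Qed.
Definition divx1L (r : laurent) : laurent :=
  @Laurent (divx1_coef r) _ (@divx1_ub r).

Definition Smap (r : laurent) : laurent :=
  if (ppart r).[1] == 0 then divx1L r else divx1L (mulxL r).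

Definition parity (r : laurent) (k : nat) : 'F_2 := (ppart (iter k Smap r)).[1].

(* Main.v *)
Require Import Defs.
From mathcomp Require Import all_boot all_order all_algebra zify.
Import Order.TTheory GRing.Theory Num.Theory.
Local Open Scope ring_scope.
Set Implicit Arguments. Unset Strict Implicit. Unset Printing Implicit Defensive.

Lemma two0 : (1 + 1 : 'F_2) = 0. Proof. by apply/val_inj. Qed.
Lemma oppF2 (x : 'F_2) : - x = x.
Proof. apply/eqP; rewrite eq_sym -subr_eq0 opprK -mulr2n -mulr_natr.
by rewrite -[2%:R]/(1+1 : 'F_2) two0 mulr0. Qed.
Lemma addxx (x : 'F_2) : x + x = 0.
Proof. by rewrite -{2}(oppF2 x) subrr. Qed.

Definition is_div (r s : laurent) := forall z, coef s (z - 1) + coef s z = coef r z.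

Lemma div_uniq r s t : is_div r s -> is_div r t -> leq_series s t.
Proof.
move=> hs ht.
set M := Num.max (ldeg s) (ldeg t).
have key : forall n : nat, forall z, M < z + n%:Z -> coef s z = coef t z.
  elim=> [|n IH] z hz.
    rewrite addr0 gt_max in hz; case/andP: hz => h1 h2.
    by rewrite !coef_ub.
  have e1 := hs (z + 1); have e2 := ht (z + 1).
  rewrite addrK -(ht (z+1)) in e1.
  rewrite (IH (z+1)) in e1; last by move: hz; lia.
  by move/addIr: e1; rewrite addrK.
move=> z; apply: (key (absz (M - z)%R).+1); lia.
Qed.

Lemma is_div_ext r r' s : leq_series r r' -> is_div r s -> is_div r' s.
Proof. by move=> e h z; rewrite h e. Qed.

Lemma div_add r1 r2 s1 s2 : is_div r1 s1 -> is_div r2 s2 ->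
  is_div (addL r1 r2) (addL s1 s2).
Proof. by move=> h1 h2 z /=; rewrite addrACA h1 h2. Qed.

Lemma divx1_is_div r : is_div r (divx1L r).
Proof.
move=> z /=; rewrite /divx1_coef.
case: (lerP z (ldeg r)) => hz.
  have E1 : absz (ldeg r - (z-1))%R = (absz (ldeg r - z)%R).+1 by lia.
  have E2 : z - 1 + 1 = z by lia.
  rewrite E1 big_ord_recl /= E2 -addrA.
  rewrite (eq_bigr (fun i : 'I_ _ => coef r (z + i.+1%:Z))); last by move=> i _; congr (coef r _); rewrite /bump /=; lia.
  by rewrite addxx addr0.
rewrite big1; last by move=> j _; apply: coef_ub; lia.
rewrite big1; last by move=> j _; apply: coef_ub; lia.
by rewrite addr0 coef_ub.
Qed.

Lemma pcoefD p q z : pcoef (p + q) z = pcoef p z + pcoef q z.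
Proof. by case: z => n /=; rewrite ?coefD ?addr0. Qed.

Lemma pcoefXM g z : pcoef ('X * g) z = pcoef g (z - 1).
Proof.
case: z => [[|n]|n].
- by rewrite /= coefXM.
- have -> : ((Posz n.+1) - 1 = Posz n) by lia.
  by rewrite /= coefXM.
- have -> : (Negz n - 1 = Negz n.+1) by lia.
  by [].
Qed.

Lemma div_poly g : is_div (polyL (('X + 1) * g)) (polyL g).
Proof. by move=> z /=; rewrite mulrDl mul1r pcoefD pcoefXM. Qed.

Lemma ppart_coef r i : (ppart r)`_i = coef r (Posz i).
Proof.
rewrite /ppart coef_poly; case: ifP => // h.
by rewrite coef_ub //; move: h; lia.
Qed.

Lemma ppart_eq r s : leq_series r s -> ppart r = ppart s.
Proof. by move=> e; apply/polyP => i; rewrite !ppart_coef e. Qed.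

Lemma ppart_add r s : ppart (addL r s) = ppart r + ppart s.
Proof. by apply/polyP => i; rewrite coefD !ppart_coef. Qed.

Lemma ppart_poly g : ppart (polyL g) = g.
Proof. by apply/polyP => i; rewrite ppart_coef. Qed.

Lemma divx1_eq r s : leq_series r s -> leq_series (divx1L r) (divx1L s).
Proof.
move=> e; apply: (div_uniq (divx1_is_div r)).
by apply: (is_div_ext _ (divx1_is_div s)) => z; rewrite e.
Qed.

Lemma Smap_eq r s : leq_series r s -> leq_series (Smap r) (Smap s).
Proof.
move=> e; rewrite /Smap (ppart_eq e); case: ifP => _; first exact: divx1_eq.
by apply: divx1_eq => z /=; rewrite e.
Qed.

Lemma iter_eq n r s : leq_series r s -> leq_series (iter n Smap r) (iter n Smap s).
Proof. by move=> e; elim: n => //= n IH; apply: Smap_eq. Qed.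

Lemma Smap_step s g : leq_series (Smap (addL s (polyL (('X + 1) * g))))
  (if (ppart s).[1] == 0 then addL (Smap s) (polyL g) else addL (Smap s) (polyL ('X * g))).
Proof.
rewrite /Smap ppart_add ppart_poly hornerD hornerM hornerD hornerX hornerC two0 mul0r addr0.
case: ifP => _.
  apply: div_uniq (divx1_is_div _) _; apply: div_add; [exact: divx1_is_div| exact: div_poly].
apply: div_uniq (divx1_is_div _) _.
apply: (@is_div_ext (addL (mulxL s) (polyL (('X + 1) * ('X * g))))).
  by move=> z /=; rewrite mulrCA pcoefXM.
apply: div_add; [exact: divx1_is_div| exact: div_poly].
Qed.

Theorem lemma2p7 (r : laurent) (k : nat) (f : {poly 'F_2}) :
  f.[1] = 1 ->
  (forall i : nat, (i < k)%N ->
     parity r i = parity (addL r (polyL (('X + 1) ^+ k * f))) i) /\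
  parity r k != parity (addL r (polyL (('X + 1) ^+ k * f))) k.
Proof.
move=> hf.
have main : forall i : nat, (i <= k)%N -> exists fi : {poly 'F_2}, fi.[1] = 1 /\
  leq_series (iter i Smap (addL r (polyL (('X + 1) ^+ k * f))))
             (addL (iter i Smap r) (polyL (('X + 1) ^+ (k - i) * fi))).
  elim=> [|i IH] hi.
    by exists f; split => // z; rewrite subn0.
  have [fi [h1 h2]] := IH (ltnW hi).
  have ek : (k - i = (k - i.+1).+1)%N by lia.
  rewrite ek exprS -mulrA in h2.
  set g := ('X + 1) ^+ (k - i.+1) * fi in h2.
  have e := Smap_eq h2.
  have e' := Smap_step (iter i Smap r) g.
  case: ifP e' => _ e'.
    exists fi; split => // z; by rewrite /= e e'.
  exists ('X * fi); split; first by rewrite hornerM hornerX h1 mul1r.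
  move=> z; rewrite /= e e' /= /g mulrCA //.
have parE : forall s g, (ppart (addL s (polyL g))).[1] = (ppart s).[1] + g.[1].
  by move=> s g; rewrite ppart_add ppart_poly hornerD.
split.
  move=> i hi; have [fi [h1 h2]] := main i (ltnW hi).
  rewrite /parity (ppart_eq h2) parE.
  have ek : (k - i = (k - i.+1).+1)%N by lia.
  by rewrite ek exprS -mulrA hornerM hornerD hornerX hornerC two0 mul0r addr0.
have [fi [h1 h2]] := main k (leqnn k).
rewrite /parity (ppart_eq h2) parE subnn expr0 mul1r h1.
apply/eqP => /(congr1 (fun x => x - (ppart (iter k Smap r)).[1])).
by rewrite subrr addrC addKr.
Qed.
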